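(* Let $n,G$ be positive integers with $2^n$ dividing $G$, let $H=G/2^n$, and let $X=\{A\subseteq G: |A|=H\}$. For $\mathcal A\subseteq X$ define \[\|\mathcal A\|_2=\min\{|x| : x\subseteq G \text{ and } x\not\subseteq a \text{ for all } a\in\mathcal A\}.\] Let $k$ be an integer with $1\leq k\leq H$. If $\mathcal A\subseteq X$ is non-empty and $\|\mathcal A\|_2\leq k$, then \[\frac{|\mathcal A|}{|X|}\leq 1-\prod_{i=0}^{k-1}\frac{H-i}{G-i}.\] Moreover, there is a set $\mathcal A^*\subseteq X$ with $\|\mathcal A^*\|_2=k$ for which equality holds in this inequality.
   Context: Natural numbers are identified with the set of their predecessors, so $G=\{0,1,\ldots,G-1\}$ and $X$ is the family of all $H$-element subsets of $G$. *)

(* Defs.v *)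
From mathcomp Require Import all_boot all_order all_algebra.
Set Implicit Arguments. Unset Strict Implicit. Unset Printing Implicit Defensive.
Import Order.TTheory GRing.Theory Num.Theory.

(* The ground set G = {0,...,G-1} is the finite type 'I_G. *)

Definition ksets (G H : nat) : {set {set 'I_G}} := [set A : {set 'I_G} | #|A| == H].

(* ||F||_2 = min { |x| : x subset of G, x not contained in any a in F }.
   (The min is over a finite set; if that set were empty the value would be G.+1,
    but this never happens for the families considered, since the full set
    [set: 'I_G] is not contained in any H-subset when H < G.) *)
Definition norm2 (G : nat) (F : {set {set 'I_G}}) : nat :=
  \big[minn/G.+1]_(x : {set 'I_G} | [forall a in F, ~~ (x \subset a)]) #|x|.

(* Main.v *)
Require Import Defs.
From mathcomp Require Import all_boot all_order all_algebra.
From mathcomp Require Import zify ring lra.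
Import Order.TTheory GRing.Theory Num.Theory.

Lemma card_sup (G H : nat) (x : {set 'I_G}) : (#|x| <= H)%N ->
  #|[set a in ksets G H | x \subset a]| = 'C(G - #|x|, H - #|x|).
Proof.
move=> xH.
have -> : [set a in ksets G H | x \subset a] =
  [set b :|: x | b in [set b : {set 'I_G} | b \subset ~: x & #|b| == H - #|x|]].
  apply/setP => a; rewrite !inE; apply/andP/imsetP.
  - move=> [/eqP aH xa]; exists (a :\: x).
      rewrite inE subsetDr /= cardsD (setIidPr xa) aH eqxx //.
    by rewrite -{1}(setID a x) (setIidPr xa) setUC.
  - move=> [b]; rewrite inE => /andP[bx /eqP bH] ->; split; last exact: subsetUr.
    rewrite cardsU bH.
    have -> : b :&: x = set0.
      apply/setP => z; rewrite !inE; apply/andP => -[zb zx].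
      by move/subsetP: bx => /(_ z zb); rewrite inE zx.
    rewrite cards0 subn0 subnK //.
rewrite card_in_imset; last first.
  move=> b1 b2; rewrite !inE => /andP[b1x _] /andP[b2x _] e.
  have dx : forall b : {set 'I_G}, b \subset ~: x -> (b :|: x) :\: x = b.
    move=> b bx; apply/setP => z; rewrite !inE.
    case zx: (z \in x); rewrite ?andbF ?andbT ?orbF //=.
    apply/esym/negbTE/negP => zb; by move/subsetP: bx => /(_ z zb); rewrite inE zx.
  by rewrite -(dx _ b1x) e dx.
by rewrite cards_draws cardsCs setCK card_ord.
Qed.
Section Aux. Local Open Scope ring_scope.

Lemma ratio (G H j : nat) : (j <= H)%N -> (H <= G)%N ->
  (('C(G - j, H - j))%:R / ('C(G, H))%:R : rat) =
  \prod_(i < j) (((H - i)%N%:R / (G - i)%N%:R)).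
Proof.
move=> jH HG; elim: j jH => [|j IH] jH.
  by rewrite !subn0 big_ord0 divff // pnatr_eq0 -lt0n bin_gt0.
rewrite big_ord_recr /= -IH; last by lia.
have e := mul_bin_diag (G - j) (H - j.+1).
have e1 : (G - j).-1 = (G - j.+1)%N by lia.
rewrite e1 in e.
have e2 : (H - j.+1).+1 = (H - j)%N by lia.
rewrite e2 in e.
have Gj : ((G - j)%N%:R : rat) != 0 by rewrite pnatr_eq0; lia.
have -> : ('C(G - j.+1, H - j.+1)%:R : rat) = ('C(G - j, H - j))%:R * (H - j)%N%:R / (G - j)%N%:R.
  by rewrite -natrM mulnC -e natrM mulrC mulKf.
ring.
Qed.

Lemma prod_mono (G H j k : nat) : (j <= k)%N -> (k <= H)%N -> (H <= G)%N ->
  (\prod_(i < k) (((H - i)%N%:R / (G - i)%N%:R)) : rat) <=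
  \prod_(i < j) (((H - i)%N%:R / (G - i)%N%:R)).
Proof.
move=> jk kH HG; elim: k jk kH => [|k IH] jk kH.
  by move: jk; rewrite leqn0 => /eqP ->.
move: jk; rewrite leq_eqVlt => /orP[/eqP -> //|jk].
rewrite big_ord_recr /=; apply: le_trans (IH _ _); last by lia. 2: by [].
apply: ler_piMr.
  by apply: prodr_ge0 => i _; apply: divr_ge0; apply: ler0n.
rewrite ler_pdivrMr ?mul1r ?ler_nat; [lia|]. by rewrite ltr0n; lia.
Qed.

Lemma extend (G : nat) (y C : {set 'I_G}) m : y \subset C -> (#|y| <= m <= #|C|)%N ->
  exists a : {set 'I_G}, [/\ y \subset a, a \subset C & #|a| = m].
Proof.
move=> yC /andP[ym mC].
have : (0 < #|[set b : {set 'I_G} | b \subset C :\: y & #|b| == (m - #|y|)%N]|)%N.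
  rewrite cards_draws bin_gt0 cardsD (setIidPr yC); lia.
rewrite card_gt0 => /set0Pn[b]; rewrite inE => /andP[bC /eqP bm].
exists (y :|: b); split; first exact: subsetUl.
  rewrite subUset yC /=; apply: subset_trans bC _; exact: subsetDl.
rewrite cardsU bm.
have -> : y :&: b = set0.
  apply/setP => z; rewrite !inE; apply/andP => -[zy zb].
  by move/subsetP: bC => /(_ z zb); rewrite inE zy.
rewrite cards0 subn0; lia.
Qed.
End Aux.

Lemma bigmin_le (T : finType) (d : nat) (P : pred T) (F : T -> nat) j :
  P j -> (\big[minn/d]_(i | P i) F i <= F j)%N.
Proof.
move=> Pj.
have : j \in index_enum T by rewrite mem_index_enum.
elim: (index_enum T) => [//|i r IH]; rewrite inE big_cons.
case/orP => [/eqP <-|jr]; first by rewrite Pj geq_minl.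
case: (P i); last exact: IH.
by rewrite geq_min IH ?orbT.
Qed.

Theorem proposition4p9 (n G : nat) :
  (0 < n)%N -> (0 < G)%N -> (2 ^ n %| G)%N ->
  forall k : nat, (1 <= k <= G %/ 2 ^ n)%N ->
  (forall F : {set {set 'I_G}},
      F \subset ksets G (G %/ 2 ^ n) -> F != set0 -> (norm2 F <= k)%N ->
      ((#|F|%:R / #|ksets G (G %/ 2 ^ n)|%:R : rat) <=
        1 - \prod_(i < k) (((G %/ 2 ^ n) - i)%:R / (G - i)%:R))%R)
  /\
  (exists Fs : {set {set 'I_G}},
      [/\ Fs \subset ksets G (G %/ 2 ^ n), norm2 Fs = k &
        (#|Fs|%:R / #|ksets G (G %/ 2 ^ n)|%:R : rat) =
        (1 - \prod_(i < k) (((G %/ 2 ^ n) - i)%:R / (G - i)%:R))%R]).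
Proof.
move=> n0 G0 dG k /andP[k1 kH].
have eG := divnK dG.
set H := G %/ 2 ^ n in kH eG *.
have p2 : (2 <= 2 ^ n)%N by rewrite -{1}(expn1 2) leq_pexp2l.
have HG : (H < G)%N by nia.
have HG' : (H <= G)%N by apply: ltnW.
have X0 : (0 < #|ksets G H|)%N by rewrite /ksets card_draws card_ord bin_gt0.
pose S (x : {set 'I_G}) := [set a in ksets G H | x \subset a].
have SX : forall x, S x \subset ksets G H.
  by move=> x; apply/subsetP => a; rewrite inE => /andP[].
have key : forall x : {set 'I_G}, (#|x| <= H)%N ->
   (#|ksets G H :\: S x|%:R / #|ksets G H|%:R : rat) =
   (1 - \prod_(i < #|x|) ((H - i)%:R / (G - i)%:R))%R.
  move=> x xH.
  rewrite cardsD (setIidPr (SX x)) natrB ?subset_leq_card //.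
  rewrite mulrBl divff ?pnatr_eq0 -?lt0n // -ratio //.
  by rewrite /S card_sup // /ksets card_draws card_ord.
split.
  move=> F sub _ normF.
  have [x [Px xk]] : exists x : {set 'I_G}, [forall a in F, ~~ (x \subset a)] /\ (#|x| <= k)%N.
    case: (pickP [pred x : {set 'I_G} | [forall a in F, ~~ (x \subset a)] && (#|x| <= k)%N])
      => [x /andP[? ?]|none]; first by exists x.
    exfalso; move: normF; apply/negP; rewrite -ltnNge /norm2.
    apply: (big_ind (fun m => k < m)%N).
    - lia.
    - by move=> a b ka kb; rewrite leq_min ka kb.
    - move=> y Py; have := none y; rewrite /= Py /= => /negbT; by rewrite -ltnNge.
  have FS : F \subset ksets G H :\: S x.
    apply/subsetP => a aF; rewrite in_setD (subsetP sub a aF) andbT inE (subsetP sub a aF) /=.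
    by move/forall_inP: Px => /(_ a aF).
  apply: (le_trans (y := (#|ksets G H :\: S x|%:R / #|ksets G H|%:R : rat))).
    apply: ler_wpM2r; first by rewrite invr_ge0 ler0n.
    by rewrite ler_nat subset_leq_card.
  rewrite key; last by lia.
  rewrite lerD2l lerN2; apply: prod_mono => //.
have : (0 < #|[set A : {set 'I_G} | #|A| == k]|)%N.
  by rewrite card_draws card_ord bin_gt0; lia.
rewrite card_gt0 => /set0Pn[x]; rewrite inE => /eqP xk.
exists (ksets G H :\: S x); split.
- exact: subsetDl.
- apply/eqP; rewrite eqn_leq; apply/andP; split.
    rewrite /norm2 -{1}xk; apply: bigmin_le.
    apply/forall_inP => a; rewrite !inE => /andP[H1 H2].
    by rewrite H2 /= in H1.
  apply: (big_ind (fun m => k <= m)%N); [lia | by move=> a b ka kb; rewrite leq_min ka kb | ].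
  move=> y /forall_inP Py; rewrite leqNgt; apply/negP => yk.
  have : ~~ (x \subset y).
    by apply/negP => /subset_leq_card; lia.
  case/subsetPn => z zx zy.
  have yC : y \subset ~: [set z].
    apply/subsetP => w wy; rewrite !inE; apply/negP => /eqP wz.
    by move: zy; rewrite -wz wy.
  have yH : (#|y| <= H <= #|~: [set z]|)%N.
    rewrite cardsC1 card_ord; apply/andP; split; lia.
  have [a [ya aC ca]] := @extend G y _ H yC yH.
  have aF : a \in ksets G H :\: S x.
    rewrite !inE ca eqxx /= andbT; apply/negP => xa.
    by move: (subsetP aC z (subsetP xa z zx)); rewrite !inE eqxx.
  by move: (Py a aF); rewrite ya.
- by rewrite key xk.
Qed.
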